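(* Let $A$ be a $\{0,1\}$-matrix and let $\mathcal{C}\subset B_*(X_A)$ be a right Markov code for $(X_A,\sigma_A)$. Suppose that $X_A$ has a fixed point $a^\infty=(a,a,a,\dots)\in X_A$ for some $a\in\Sigma_A$. Then for $m\ge1$, the word $a^m=a a\cdots a$ ($m$ letters) belongs to $\mathcal{C}$ if and only if $m=1$.
   Context: For an $N\times N$ matrix $A$ with entries in $\{0,1\}$, $\Sigma_A=\{1,\dots,N\}$, $X_A$ is the set of sequences $(x_n)_{n\in\mathbb{N}}$ in $\Sigma_A$ with $A(x_n,x_{n+1})=1$ for all $n$, with shift $\sigma_A((x_n)_n)=(x_{n+1})_n$. $B_k(X_A)$ is the set of admissible words of length $k$, $B_*(X_A)$ the union over $k\ge0$ (including the empty word). For a word $w=w_1\cdots w_\ell$, $\sigma_A(w)=w_2\cdots w_\ell$. A code is a nonempty $\mathcal{C}\subset B_*(X_A)$ such that any equality of concatenations $\omega(i_1)\cdots\omega(i_k)=\omega(j_1)\cdots\omega(j_n)$ of words of $\mathcal{C}$ forces $n=k$ and $\omega(i_m)=\omega(j_m)$ for all $m$; a prefix code is a code in which no word is a prefix of another. A finite prefix code $\mathcal{C}=\{\omega(1),\dots,\omega(M)\}\subset B_*(X_A)$, $\Sigma_{A(\mathcal{C})}=\{1,\dots,M\}$, is a right Markov code for $(X_A,\sigma_A)$ if: (i) for every $\gamma\in B_*(X_A)$ there is $\eta\in B_*(X_A)$ with $\gamma\eta\in B_*(X_A)$ and a unique finite sequence $(i_1,\dots,i_k)$ in $\Sigma_{A(\mathcal{C})}$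 with $\gamma\eta=\omega(i_1)\cdots\omega(i_k)$; (ii) there is $L\in\mathbb{N}$ such that for all $i_1,\dots,i_L$ with $\omega(i_1)\cdots\omega(i_L)\in B_*(X_A)$ there exist $j_1,\dots,j_k\in\Sigma_{A(\mathcal{C})}$ with $\sigma_A(\omega(i_1))\omega(i_2)\cdots\omega(i_L)=\omega(j_1)\cdots\omega(j_k)$; (iii) for every $i,j$ there are $n_1,\dots,n_l$ with $\omega(i)\omega(n_1)\cdots\omega(n_l)\omega(j)\in B_*(X_A)$. *)

(* Defs.v *)
From mathcomp Require Import all_boot all_order all_algebra.
Set Implicit Arguments. Unset Strict Implicit. Unset Printing Implicit Defensive.

(* Alphabet Sigma_A = {1,..,N} is represented by 'I_N (0-based).
   A is an N x N matrix with entries in {0,1} (stated as a hypothesis). *)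
Definition word (N : nat) := seq 'I_N.

Definition in_XA (N : nat) (A : 'M[nat]_N) (x : nat -> 'I_N) : Prop :=
  forall n, A (x n) (x n.+1) = 1%N.

(* B_*(X_A): words occurring in points of X_A (equivalently, by shift
   invariance, initial segments of points of X_A); includes the empty word. *)
Definition inB (N : nat) (A : 'M[nat]_N) (w : word N) : Prop :=
  exists x : nat -> 'I_N, in_XA A x /\ w = mkseq x (size w).

Definition sigmaw (N : nat) (w : word N) : word N := behead w.

(* A finite set of words C, given as a duplicate-free list; a "factorization"
   is a finite sequence of codewords. *)
Definition codeseq (N : nat) (C : seq (word N)) (ws : seq (word N)) : bool :=
  all (fun w => w \in C) ws.

Definition is_code (N : nat) (C : seq (word N)) : Prop :=
  C != [::] /\
  forall ws vs, codeseq C ws -> codeseq C vs -> flatten ws = flatten vs -> ws = vs.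

Definition is_prefix_code (N : nat) (C : seq (word N)) : Prop :=
  is_code C /\
  forall u v, u \in C -> v \in C -> prefix u v -> u = v.

Definition right_Markov_code (N : nat) (A : 'M[nat]_N) (C : seq (word N)) : Prop :=
  uniq C /\
  (forall w, w \in C -> inB A w) /\
  is_prefix_code C /\
  (forall g, inB A g ->
     exists eta, inB A eta /\ inB A (g ++ eta) /\
       exists! ws, codeseq C ws /\ flatten ws = g ++ eta) /\
  (exists L : nat, (0 < L)%N /\
     forall ws, size ws = L -> codeseq C ws -> inB A (flatten ws) ->
       exists vs, codeseq C vs /\
         sigmaw (head [::] ws) ++ flatten (behead ws) = flatten vs) /\
  (forall u v, u \in C -> v \in C ->
     exists ns, codeseq C ns /\ inB A (u ++ flatten ns ++ v)).

(* Main.v *)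
Require Import Defs.
From mathcomp Require Import all_boot all_order all_algebra.
From mathcomp Require Import zify.

Lemma nil_notin (N : nat) (C : seq (word N)) : is_code C -> [::] \notin C.
Proof.
case=> _ H; apply/negP=> Hn.
have := H [:: [::]] [::]; rewrite /codeseq /= Hn => /(_ isT isT erefl) //.
Qed.

Lemma prefix_nseq (T : eqType) (a : T) i j : i <= j -> prefix (nseq i a) (nseq j a).
Proof. by move=> h; rewrite -(subnKC h) nseqD prefix_prefix. Qed.

Lemma nseq_head (T : eqType) (a : T) (v s : seq T) n :
  size v <= n -> v ++ s = nseq n a -> v = nseq (size v) a.
Proof.
move=> h e; have := congr1 (take (size v)) e.
by rewrite take_size_cat // take_nseq.
Qed.

Lemma factor_nseq (N : nat) (C : seq (word N)) (a : 'I_N) m :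
  is_prefix_code C -> nseq m a \in C ->
  forall vs n, codeseq C vs -> flatten vs = nseq n a -> n = m * size vs.
Proof.
move=> [Hc Hp] Hm; elim=> [|v vs IH] n /=.
  by move=> _ /(congr1 size); rewrite size_nseq => <-; rewrite muln0.
move=> /andP[Hv Hvs] e.
have hs : size v <= n by have := congr1 size e; rewrite size_cat size_nseq => <-; apply: leq_addr.
have ev := @nseq_head _ a _ _ _ hs e.
have szv : size v = m.
  case: (leqP (size v) m) => h.
    have := Hp _ _ Hv Hm; rewrite ev => /(_ (@prefix_nseq _ a _ _ h)).
    by move/(congr1 size); rewrite !size_nseq.
  have := Hp _ _ Hm Hv; rewrite ev => /(_ (@prefix_nseq _ a _ _ (ltnW h))).
  by move/(congr1 size); rewrite !size_nseq.
have e2 : flatten vs = nseq (n - m) a.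
  have hmn : m <= n by rewrite -szv.
  move: e; rewrite ev szv -{1}(subnKC hmn) nseqD.
  by move/eqP; rewrite eqseq_cat ?size_nseq // => /andP[_ /eqP].
have := IH _ Hvs e2; rewrite -szv in hs *; lia.
Qed.

Lemma map_const_iota (T : Type) (a : T) k i : map (fun _ => a) (iota i k) = nseq k a.
Proof. by elim: k i => //= k IH i; rewrite IH. Qed.

Lemma inB_nseq (N : nat) (A : 'M[nat]_N) (a : 'I_N) k :
  in_XA A (fun _ => a) -> inB A (nseq k a).
Proof.
move=> H; exists (fun _ => a); split => //.
by rewrite size_nseq /mkseq map_const_iota.
Qed.

Lemma flatten_nseq_nseq (T : Type) (a : T) L m :
  flatten (nseq L (nseq m a)) = nseq (L * m) a.
Proof. by elim: L => //= L IH; rewrite IH mulSn nseqD. Qed.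

Lemma size_le_sumn (T : eqType) (C : seq (seq T)) w :
  w \in C -> size w <= sumn (map size C).
Proof.
elim: C => //= c C IH; rewrite in_cons => /orP[/eqP -> | /IH h].
  exact: leq_addr.
exact: leq_trans h (leq_addl _ _).
Qed.

Theorem mainTheorem5 (N : nat) (A : 'M[nat]_N) (C : seq (word N))
  (A01 : forall i j, A i j = 0%N \/ A i j = 1%N)
  (HC : right_Markov_code A C)
  (a : 'I_N) (Hfix : in_XA A (fun _ => a)) :
  forall m : nat, (1 <= m)%N -> ((nseq m a \in C) <-> m = 1%N).
Proof.
case: HC => _ [_ [Hpc [Hi [[L [L0 Hii]] _]]]].
have dir1 : forall m, 1 <= m -> nseq m a \in C -> m = 1.
  move=> m m1 Hm.
  have cs : codeseq C (nseq L (nseq m a)).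
    by apply/allP => w /nseqP [-> _].
  have ib : inB A (flatten (nseq L (nseq m a))).
    by rewrite flatten_nseq_nseq; apply: inB_nseq.
  have [vs [Hvs e]] := Hii (nseq L (nseq m a)) (size_nseq _ _) cs ib.
  move: e; clear cs ib; case: L L0 {Hii} => // L _ /=.
  rewrite /sigmaw flatten_nseq_nseq; case: m m1 Hm => // m _ Hm /=.
  rewrite -nseqD => /esym /(@factor_nseq _ _ _ _ Hpc Hm _ _ Hvs).
  set s := size vs => e; case: (leqP s L) => h.
    have : m.+1 * s <= m.+1 * L by rewrite leq_mul2l h orbT.
    lia.
  have : m.+1 * L.+1 <= m.+1 * s by rewrite leq_mul2l h orbT.
  lia.
move=> m m1; split; first exact: dir1.
move=> ->.
set n := (sumn (map size C)).+1.
have [eta [_ [_ [ws [[Hws e] _]]]]] := Hi _ (@inB_nseq _ _ _ n Hfix).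
case: ws Hws e => [|w ws].
  by move=> _ /(congr1 size); rewrite size_cat size_nseq.
move=> /andP[Hw _]; rewrite [flatten _]/= => e.
have hs : size w <= n by apply: ltnW; rewrite ltnS size_le_sumn.
have ew : w = nseq (size w) a.
  have := congr1 (take (size w)) e.
  by rewrite take_size_cat // takel_cat ?size_nseq // take_nseq.
have w0 : 1 <= size w.
  case: w {hs e} Hw ew => // Hw _.
  by case: Hpc => Hc _; move: (@nil_notin _ _ Hc); rewrite Hw.
rewrite ew in Hw; have := dir1 _ w0 Hw.
by move=> h; move: Hw; rewrite h.
Qed.
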